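(* Let $\mathcal P=\langle F,R\rangle$ be a program and $H$ a hypothesis. Let $IF(F,H)=\{A\mid F(A)\neq\mathcal U,\ H(A)\neq\mathcal U,\ F(A)\neq H(A)\}$, $PF_0=\emptyset$, and for $i\ge1$ $$PF_i=\{A\mid A\leftarrow B\in R \text{ and } B\not\equiv H(A)\text{ w.r.t. } F\oplus H_{/(\mathcal{HB}_{\mathcal P}\setminus IF(F,H))\setminus PF_{i-1}}\},$$ and let $PF=\bigcup_i PF_i$ (the limit of this increasing sequence). Then $$s^H_{\mathcal P}=H_{/(\mathcal{HB}_{\mathcal P}\setminus IF(F,H))\setminus PF}.$$
   Context: Let $\langle \mathcal{B},\le_t,\le_k\rangle$ be a complete, infinitely distributive bilattice with negation satisfying the infinitary interlacing conditions; $\wedge,\vee$ are meet/join for $\le_t$, $\otimes,\oplus$ meet/join for $\le_k$, $\mathcal U$ is the bottom of $\le_k$. A closed formula is built from ground literals and elements of $\mathcal B$ using $\wedge,\vee,\otimes,\oplus,\exists,\forall$ (quantifiers over closed terms). A program $\mathcal P=\langle F,R\rangle$ consists of a function $F$ from the Herbrand base $\mathcal{HB}_{\mathcal P}$ to $\mathcal B$ and a finite set $R$ of ground clauses $A\leftarrow B$, each ground atom being the head of at most one clause; $Head(\mathcal P)$ is the set of heads. An interpretation (hypothesis) is a function $\mathcal{HB}_{\mathcal P}\to\mathcal B$, extended to closed formulas homomorphically ($I(\neg A)=\neg I(A)$, $I(X\wedge Y)=I(X)\wedge I(Y)$ etc., $\exists$ as $\bigvee$, $\forall$ as $\bigwedge$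 over closed instances). Operations on interpretations are pointwise. $I,J$ are compatible if $I(A)\neq\mathcal U$ and $J(A)\neq\mathcal U$ imply $I(A)=J(A)$. $I\le J$ means $I(A)\neq\mathcal U\Rightarrow I(A)=J(A)$ for all $A$. $I_{/S}$ is $I$ on $S$ and $\mathcal U$ elsewhere. $B\equiv_I\alpha$ means $J(B)=\alpha$ for all $J$ with $I\le J$. $T_R(I)(A)=\alpha$ if there is a clause $A\leftarrow B$ in $R$ with $B\equiv_I\alpha$, and $\mathcal U$ otherwise. $H'$ is sound w.r.t. $\mathcal P$ if $F,H'$ are compatible and $H'_{/Head(\mathcal P)}\le T_R(F\oplus H')$. The support $s^H_{\mathcal P}$ is the maximal (w.r.t. $\le$) interpretation $H'\le H$ that is sound w.r.t. $\mathcal P$, i.e. $\bigoplus\{H'\mid H'\le H,\ H'\text{ sound}\}$. *)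

(* Defs.v *)
From Stdlib Require Import List Classical ClassicalEpsilon.
Import ListNotations.
Set Implicit Arguments.

Definition imgset {X Y : Type} (f : X -> Y) (S : X -> Prop) : Y -> Prop :=
  fun y => exists x, S x /\ y = f x.
Definition rangeset {I Y : Type} (f : I -> Y) : Y -> Prop :=
  fun y => exists i, y = f i.

Record Bilattice := {
  car :> Type;
  le_t : car -> car -> Prop;
  le_k : car -> car -> Prop;
  le_t_refl : forall x, le_t x x;
  le_t_trans : forall x y z, le_t x y -> le_t y z -> le_t x z;
  le_t_anti : forall x y, le_t x y -> le_t y x -> x = y;
  le_k_refl : forall x, le_k x x;
  le_k_trans : forall x y z, le_k x y -> le_k y z -> le_k x z;
  le_k_anti : forall x y, le_k x y -> le_k y x -> x = y;
  tmeet : car -> car -> car;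
  tjoin : car -> car -> car;
  kmeet : car -> car -> car;
  kjoin : car -> car -> car;
  tmeet_l : forall x y, le_t (tmeet x y) x;
  tmeet_r : forall x y, le_t (tmeet x y) y;
  tmeet_glb : forall x y z, le_t z x -> le_t z y -> le_t z (tmeet x y);
  tjoin_l : forall x y, le_t x (tjoin x y);
  tjoin_r : forall x y, le_t y (tjoin x y);
  tjoin_lub : forall x y z, le_t x z -> le_t y z -> le_t (tjoin x y) z;
  kmeet_l : forall x y, le_k (kmeet x y) x;
  kmeet_r : forall x y, le_k (kmeet x y) y;
  kmeet_glb : forall x y z, le_k z x -> le_k z y -> le_k z (kmeet x y);
  kjoin_l : forall x y, le_k x (kjoin x y);
  kjoin_r : forall x y, le_k y (kjoin x y);
  kjoin_lub : forall x y z, le_k x z -> le_k y z -> le_k (kjoin x y) z;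
  bigtmeet : (car -> Prop) -> car;
  bigtjoin : (car -> Prop) -> car;
  bigkmeet : (car -> Prop) -> car;
  bigkjoin : (car -> Prop) -> car;
  bigtmeet_lb : forall S x, S x -> le_t (bigtmeet S) x;
  bigtmeet_glb : forall S z, (forall x, S x -> le_t z x) -> le_t z (bigtmeet S);
  bigtjoin_ub : forall S x, S x -> le_t x (bigtjoin S);
  bigtjoin_lub : forall S z, (forall x, S x -> le_t x z) -> le_t (bigtjoin S) z;
  bigkmeet_lb : forall S x, S x -> le_k (bigkmeet S) x;
  bigkmeet_glb : forall S z, (forall x, S x -> le_k z x) -> le_k z (bigkmeet S);
  bigkjoin_ub : forall S x, S x -> le_k x (bigkjoin S);
  bigkjoin_lub : forall S z, (forall x, S x -> le_k x z) -> le_k (bigkjoin S) z;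
  neg : car -> car;
  neg_anti_t : forall x y, le_t x y -> le_t (neg y) (neg x);
  neg_mono_k : forall x y, le_k x y -> le_k (neg x) (neg y);
  neg_invol : forall x, neg (neg x) = x;
  interlace_kmeet : forall (I : Type) (f g : I -> car),
    (forall i, le_t (f i) (g i)) -> le_t (bigkmeet (rangeset f)) (bigkmeet (rangeset g));
  interlace_kjoin : forall (I : Type) (f g : I -> car),
    (forall i, le_t (f i) (g i)) -> le_t (bigkjoin (rangeset f)) (bigkjoin (rangeset g));
  interlace_tmeet : forall (I : Type) (f g : I -> car),
    (forall i, le_k (f i) (g i)) -> le_k (bigtmeet (rangeset f)) (bigtmeet (rangeset g));
  interlace_tjoin : forall (I : Type) (f g : I -> car),
    (forall i, le_k (f i) (g i)) -> le_k (bigtjoin (rangeset f)) (bigtjoin (rangeset g));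
  dist_tmeet_bigtjoin : forall a S, (exists s, S s) ->
    tmeet a (bigtjoin S) = bigtjoin (imgset (tmeet a) S);
  dist_tmeet_bigkmeet : forall a S, (exists s, S s) ->
    tmeet a (bigkmeet S) = bigkmeet (imgset (tmeet a) S);
  dist_tmeet_bigkjoin : forall a S, (exists s, S s) ->
    tmeet a (bigkjoin S) = bigkjoin (imgset (tmeet a) S);
  dist_tjoin_bigtmeet : forall a S, (exists s, S s) ->
    tjoin a (bigtmeet S) = bigtmeet (imgset (tjoin a) S);
  dist_tjoin_bigkmeet : forall a S, (exists s, S s) ->
    tjoin a (bigkmeet S) = bigkmeet (imgset (tjoin a) S);
  dist_tjoin_bigkjoin : forall a S, (exists s, S s) ->
    tjoin a (bigkjoin S) = bigkjoin (imgset (tjoin a) S);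
  dist_kmeet_bigtmeet : forall a S, (exists s, S s) ->
    kmeet a (bigtmeet S) = bigtmeet (imgset (kmeet a) S);
  dist_kmeet_bigtjoin : forall a S, (exists s, S s) ->
    kmeet a (bigtjoin S) = bigtjoin (imgset (kmeet a) S);
  dist_kmeet_bigkjoin : forall a S, (exists s, S s) ->
    kmeet a (bigkjoin S) = bigkjoin (imgset (kmeet a) S);
  dist_kjoin_bigtmeet : forall a S, (exists s, S s) ->
    kjoin a (bigtmeet S) = bigtmeet (imgset (kjoin a) S);
  dist_kjoin_bigtjoin : forall a S, (exists s, S s) ->
    kjoin a (bigtjoin S) = bigtjoin (imgset (kjoin a) S);
  dist_kjoin_bigkmeet : forall a S, (exists s, S s) ->
    kjoin a (bigkmeet S) = bigkmeet (imgset (kjoin a) S)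
}.

Definition bU (B : Bilattice) : B := bigkjoin B (fun _ => False).

(* Closed formulas over closed terms Term and ground atoms Atom (the Herbrand
   base).  Quantifiers are represented in higher-order abstract syntax:
   the closed instances of (exists x. phi) are (phi t) for closed terms t. *)
Inductive formula (Term Atom V : Type) : Type :=
| FPos : Atom -> formula Term Atom V
| FNeg : Atom -> formula Term Atom V
| FVal : V -> formula Term Atom V
| FAnd : formula Term Atom V -> formula Term Atom V -> formula Term Atom V
| FOr : formula Term Atom V -> formula Term Atom V -> formula Term Atom V
| FOtimes : formula Term Atom V -> formula Term Atom V -> formula Term Atom V
| FOplus : formula Term Atom V -> formula Term Atom V -> formula Term Atom V
| FEx : (Term -> formula Term Atom V) -> formula Term Atom V
| FAll : (Term -> formula Term Atom V) -> formula Term Atom V.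

Arguments FPos {Term Atom V}.
Arguments FNeg {Term Atom V}.
Arguments FVal {Term Atom V}.
Arguments FAnd {Term Atom V}.
Arguments FOr {Term Atom V}.
Arguments FOtimes {Term Atom V}.
Arguments FOplus {Term Atom V}.
Arguments FEx {Term Atom V}.
Arguments FAll {Term Atom V}.

Definition interp (B : Bilattice) (Atom : Type) := Atom -> car B.

Fixpoint eval (B : Bilattice) (Term Atom : Type) (I : interp B Atom)
  (phi : formula Term Atom (car B)) : car B :=
  match phi with
  | FPos A => I A
  | FNeg A => neg B (I A)
  | FVal v => v
  | FAnd p q => tmeet B (eval I p) (eval I q)
  | FOr p q => tjoin B (eval I p) (eval I q)
  | FOtimes p q => kmeet B (eval I p) (eval I q)
  | FOplus p q => kjoin B (eval I p) (eval I q)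
  | FEx f => bigtjoin B (fun y => exists t : Term, y = eval I (f t))
  | FAll f => bigtmeet B (fun y => exists t : Term, y = eval I (f t))
  end.

(* programs P = <F, R>; R a finite set (list) of ground clauses A <- Body *)
Record program (B : Bilattice) (Term Atom : Type) := Program {
  pF : interp B Atom;
  pR : list (Atom * formula Term Atom (car B))
}.

Definition heads_unique (B : Bilattice) (Term Atom : Type) (P : program B Term Atom) :=
  forall A b1 b2, In (A, b1) (pR P) -> In (A, b2) (pR P) -> b1 = b2.

Definition Head (B : Bilattice) (Term Atom : Type) (P : program B Term Atom) : Atom -> Prop :=
  fun A => exists b, In (A, b) (pR P).

Definition ioplus (B : Bilattice) (Atom : Type) (I J : interp B Atom) : interp B Atom :=
  fun A => kjoin B (I A) (J A).

Definition compatible (B : Bilattice) (Atom : Type) (I J : interp B Atom) : Prop :=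
  forall A, I A <> bU B -> J A <> bU B -> I A = J A.

Definition ile (B : Bilattice) (Atom : Type) (I J : interp B Atom) : Prop :=
  forall A, I A <> bU B -> I A = J A.

Definition restrict (B : Bilattice) (Atom : Type) (I : interp B Atom) (S : Atom -> Prop)
  : interp B Atom :=
  fun A => if excluded_middle_informative (S A) then I A else bU B.

Definition equivI (B : Bilattice) (Term Atom : Type) (I : interp B Atom)
  (phi : formula Term Atom (car B)) (alpha : car B) : Prop :=
  forall J, ile I J -> eval J phi = alpha.

(* T_R(I)(A) = alpha if some clause A <- Body in R has Body ==_I alpha, U otherwise *)
Definition TR (B : Bilattice) (Term Atom : Type) (P : program B Term Atom)
  (I : interp B Atom) : interp B Atom :=
  fun A => epsilon (inhabits (bU B)) (fun alpha =>
    (exists b, In (A, b) (pR P) /\ equivI I b alpha) \/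
    ((~ exists b a, In (A, b) (pR P) /\ equivI I b a) /\ alpha = bU B)).

Definition sound (B : Bilattice) (Term Atom : Type) (P : program B Term Atom)
  (H' : interp B Atom) : Prop :=
  compatible (pF P) H' /\ ile (restrict H' (Head P)) (TR P (ioplus (pF P) H')).

Definition support (B : Bilattice) (Term Atom : Type) (P : program B Term Atom)
  (H : interp B Atom) : interp B Atom :=
  fun A => bigkjoin B (fun y => exists H', ile H' H /\ sound P H' /\ y = H' A).

Definition IFset (B : Bilattice) (Atom : Type) (F H : interp B Atom) : Atom -> Prop :=
  fun A => F A <> bU B /\ H A <> bU B /\ F A <> H A.

Fixpoint PFi (B : Bilattice) (Term Atom : Type) (P : program B Term Atom)
  (H : interp B Atom) (i : nat) : Atom -> Prop :=
  match i with
  | O => fun _ => False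
  | S j => fun A => exists b, In (A, b) (pR P) /\
      ~ equivI (ioplus (pF P)
                 (restrict H (fun A' => ~ IFset (pF P) H A' /\ ~ PFi P H j A')))
               b (H A)
  end.

Definition PFset (B : Bilattice) (Term Atom : Type) (P : program B Term Atom)
  (H : interp B Atom) : Atom -> Prop :=
  fun A => exists i, PFi P H i A.

(* Main.v *)
Require Import Defs.
From Stdlib Require Import List Classical ClassicalEpsilon.
From Stdlib Require Import FunctionalExtensionality Lia PeanoNat.
Import ListNotations.
Set Implicit Arguments.

Lemma bU_least (B : Bilattice) (x : car B) : le_k B (bU B) x.
Proof. unfold bU. apply bigkjoin_lub. intros y []. Qed.

Lemma kjoin_U (B : Bilattice) (x : car B) : kjoin B x (bU B) = x.
Proof.
  apply le_k_anti. apply kjoin_lub. apply le_k_refl. apply bU_least.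
  apply kjoin_l.
Qed.

Lemma kjoin_idem (B : Bilattice) (x : car B) : kjoin B x x = x.
Proof.
  apply le_k_anti. apply kjoin_lub; apply le_k_refl. apply kjoin_l.
Qed.

Lemma restrict_in (B : Bilattice) (Atom : Type) (H : interp B Atom) (S : Atom -> Prop) A :
  S A -> restrict H S A = H A.
Proof. unfold restrict; destruct excluded_middle_informative; tauto. Qed.

Lemma restrict_ne (B : Bilattice) (Atom : Type) (H : interp B Atom) (S : Atom -> Prop) A :
  restrict H S A <> bU B -> S A /\ restrict H S A = H A.
Proof. unfold restrict; destruct excluded_middle_informative; tauto. Qed.
Arguments restrict_ne {B Atom H S A}.

Lemma ile_refl (B : Bilattice) (Atom : Type) (I : interp B Atom) : ile I I.
Proof. intros A _; reflexivity. Qed.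

Lemma ile_trans (B : Bilattice) (Atom : Type) (I J K : interp B Atom) :
  ile I J -> ile J K -> ile I K.
Proof.
  intros h1 h2 A ne. rewrite (h1 A ne). apply h2. rewrite <- (h1 A ne). exact ne.
Qed.

Lemma equivI_mono (B : Bilattice) (Term Atom : Type) (I I' : interp B Atom)
  (b : formula Term Atom (car B)) a :
  equivI I b a -> ile I I' -> equivI I' b a.
Proof. intros he hi J hj. apply he. eapply ile_trans; eauto. Qed.

Lemma equivI_eval (B : Bilattice) (Term Atom : Type) (I : interp B Atom)
  (b : formula Term Atom (car B)) a :
  equivI I b a -> eval I b = a.
Proof. intros he. apply he. apply ile_refl. Qed.

Lemma ile_oplus (B : Bilattice) (Atom : Type) (F G1 G2 : interp B Atom) :
  ile G1 G2 -> compatible F G2 -> ile (ioplus F G1) (ioplus F G2).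
Proof.
  intros Hle Hc A Hne. unfold ioplus in *.
  destruct (classic (G1 A = bU B)) as [e|ne].
  - rewrite e in *. rewrite kjoin_U in *.
    destruct (classic (G2 A = bU B)) as [e2|ne2].
    + rewrite e2, kjoin_U; auto.
    + rewrite <- (Hc A Hne ne2). rewrite kjoin_idem; auto.
  - rewrite (Hle A ne). reflexivity.
Qed.

Definition Gint (B : Bilattice) (Term Atom : Type) (P : program B Term Atom)
  (H : interp B Atom) (X : Atom -> Prop) : interp B Atom :=
  restrict H (fun A' => ~ IFset (pF P) H A' /\ ~ X A').

Definition step (B : Bilattice) (Term Atom : Type) (P : program B Term Atom)
  (H : interp B Atom) (X : Atom -> Prop) : Atom -> Prop :=
  fun A => exists b, In (A, b) (pR P) /\
    ~ equivI (ioplus (pF P) (Gint P H X)) b (H A).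

Lemma PFi_S (B : Bilattice) (Term Atom : Type) (P : program B Term Atom)
  (H : interp B Atom) j A :
  PFi P H (S j) A <-> step P H (PFi P H j) A.
Proof. split; auto. Qed.

Lemma Gint_compat (B : Bilattice) (Term Atom : Type) (P : program B Term Atom)
  (H : interp B Atom) X : compatible (pF P) (Gint P H X).
Proof.
  intros A HF HG. unfold Gint in *.
  pose proof (restrict_ne HG) as [[HnIF _] HGe]. rewrite HGe in *.
  apply NNPP; intro Hne. apply HnIF. unfold IFset. auto.
Qed.

Lemma Gint_anti (B : Bilattice) (Term Atom : Type) (P : program B Term Atom)
  (H : interp B Atom) (X Y : Atom -> Prop) :
  (forall A, X A -> Y A) -> ile (Gint P H Y) (Gint P H X).
Proof.
  intros hxy A Hne. unfold Gint in *. pose proof (restrict_ne Hne) as [[h1 h2] e].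
  rewrite e. rewrite restrict_in; auto.
Qed.

Lemma step_mono (B : Bilattice) (Term Atom : Type) (P : program B Term Atom)
  (H : interp B Atom) (X Y : Atom -> Prop) A :
  (forall A, X A -> Y A) -> step P H X A -> step P H Y A.
Proof.
  intros hxy [b [Hin Hn]]. exists b; split; auto. intro He. apply Hn.
  eapply equivI_mono; [exact He|]. apply ile_oplus. apply Gint_anti; auto.
  apply Gint_compat.
Qed.

Lemma PFi_mono_S (B : Bilattice) (Term Atom : Type) (P : program B Term Atom)
  (H : interp B Atom) i : forall A, PFi P H i A -> PFi P H (S i) A.
Proof.
  induction i; intros A h.
  - destruct h.
  - apply PFi_S. apply PFi_S in h. eapply step_mono; [|exact h]. exact IHi.
Qed.

Lemma PFi_mono_le (B : Bilattice) (Term Atom : Type) (P : program B Term Atom)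
  (H : interp B Atom) i j A : i <= j -> PFi P H i A -> PFi P H j A.
Proof.
  induction 1; auto. intro h. apply PFi_mono_S; auto.
Qed.

Lemma PFi_head (B : Bilattice) (Term Atom : Type) (P : program B Term Atom)
  (H : interp B Atom) i A : PFi P H i A -> Head P A.
Proof.
  destruct i; simpl. intros []. intros [b [Hin _]]. exists b; auto.
Qed.

Lemma filter_len_le {T} (p q : T -> bool) l :
  (forall x, p x = true -> q x = true) -> length (filter p l) <= length (filter q l).
Proof.
  intros hpq. induction l as [|a l IH]; simpl; auto.
  destruct (p a) eqn:ep; destruct (q a) eqn:eq; simpl; try lia.
  rewrite (hpq a ep) in eq; discriminate.
Qed.

Lemma filter_len_lt {T} (p q : T -> bool) l x :
  (forall x, p x = true -> q x = true) -> In x l -> q x = true -> p x = false ->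
  length (filter p l) < length (filter q l).
Proof.
  intros hpq. revert x. induction l as [|a l IH]; simpl; [intros ? []|].
  intros x [<-|Hin] hq hp.
  - rewrite hq, hp; simpl. pose proof (filter_len_le p q l hpq). lia.
  - specialize (IH x Hin hq hp).
    destruct (p a) eqn:ep; destruct (q a) eqn:eq; simpl; try lia.
    rewrite (hpq a ep) in eq; discriminate.
Qed.

Lemma filter_len_bound {T} (p : T -> bool) l : length (filter p l) <= length l.
Proof. induction l; simpl; auto. destruct (p a); simpl; lia. Qed.

Definition cnt (B : Bilattice) (Term Atom : Type) (P : program B Term Atom)
  (H : interp B Atom) i :=
  length (filter (fun p => if excluded_middle_informative (PFi P H i (fst p))
                           then true else false) (pR P)).

Lemma PFi_stab1 (B : Bilattice) (Term Atom : Type) (P : program B Term Atom)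
  (H : interp B Atom) : exists N, forall A, PFi P H (S N) A -> PFi P H N A.
Proof.
  apply NNPP; intro Hn.
  assert (Hk : forall N, exists A, PFi P H (S N) A /\ ~ PFi P H N A).
  { intro N. pose proof (not_ex_all_not _ _ Hn N) as h.
    destruct (not_all_ex_not _ _ h) as [A hA]. exists A.
    apply imply_to_and; auto. }
  assert (Hinc : forall N, cnt P H N < cnt P H (S N)).
  { intro N. destruct (Hk N) as [A [h1 h2]]. destruct (PFi_head _ _ _ _ h1) as [b Hin].
    unfold cnt. apply filter_len_lt with (x := (A, b)); simpl; auto.
    - intros x. destruct excluded_middle_informative as [e|e]; [|discriminate].
      destruct excluded_middle_informative as [e'|e']; auto.
      exfalso; apply e'; apply PFi_mono_S; auto.
    - destruct excluded_middle_informative; auto; contradiction.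
    - destruct excluded_middle_informative; auto; contradiction. }
  assert (Hge : forall N, N <= cnt P H N).
  { induction N. lia. specialize (Hinc N). lia. }
  specialize (Hge (S (length (pR P)))).
  pose proof (filter_len_bound (fun p => if excluded_middle_informative
     (PFi P H (S (length (pR P))) (fst p)) then true else false) (pR P)).
  unfold cnt in Hge. lia.
Qed.

Lemma PFi_stable (B : Bilattice) (Term Atom : Type) (P : program B Term Atom)
  (H : interp B Atom) : exists N, forall m A, PFi P H m A -> PFi P H N A.
Proof.
  destruct (PFi_stab1 P H) as [N HN]. exists N.
  assert (Hk : forall k A, PFi P H (N + k) A -> PFi P H N A).
  { induction k; intros A.
    - rewrite Nat.add_0_r; auto.
    - rewrite Nat.add_succ_r. intro h. apply HN. apply PFi_S. apply PFi_S in h.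
      eapply step_mono; [|exact h]. exact IHk. }
  intros m A h. destruct (Nat.le_gt_cases m N).
  - apply PFi_mono_le with m; auto.
  - replace m with (N + (m - N)) in h by lia. eauto.
Qed.

Lemma TR_spec (B : Bilattice) (Term Atom : Type) (P : program B Term Atom)
  (I : interp B Atom) A :
  TR P I A <> bU B -> exists b, In (A, b) (pR P) /\ equivI I b (TR P I A).
Proof.
  unfold TR. intro Hne.
  lazymatch goal with |- context [epsilon ?i ?Pr] =>
    pose proof (epsilon_spec i Pr) as Hs end.
  cbv beta in Hs.
  destruct Hs as [h|[_ h]]; [| exact h | contradiction].
  destruct (classic (exists b a, In (A, b) (pR P) /\ equivI I b a))
    as [[b [a [h1 h2]]]|hn].
  - exists a; left; eauto.
  - exists (bU B); right; auto.
Qed.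

Lemma TR_eq (B : Bilattice) (Term Atom : Type) (P : program B Term Atom)
  (I : interp B Atom) A b a :
  heads_unique P -> In (A, b) (pR P) -> equivI I b a -> TR P I A = a.
Proof.
  intros Hu Hin He. unfold TR.
  lazymatch goal with |- context [epsilon ?i ?Pr] =>
    pose proof (epsilon_spec i Pr) as Hs end.
  cbv beta in Hs.
  destruct Hs as [[b' [Hin' He']]|[hn _]].
  - exists a; left; eauto.
  - rewrite (Hu A b b' Hin Hin') in He.
    rewrite <- (equivI_eval He), <- (equivI_eval He'). reflexivity.
  - exfalso; apply hn; eauto.
Qed.

Theorem mainTheorem5 (B : Bilattice) (Term Atom : Type) (P : program B Term Atom)
  (Huniq : heads_unique P) (H : interp B Atom) :
  support P H = restrict H (fun A => ~ IFset (pF P) H A /\ ~ PFset P H A).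
Proof.
  set (G := restrict H (fun A => ~ IFset (pF P) H A /\ ~ PFset P H A)).
  assert (upper : forall H', ile H' H -> sound P H' -> forall A, H' A <> bU B ->
            ~ IFset (pF P) H A /\ ~ PFset P H A).
  { intros H' Hle [Hc Hs].
    assert (IFnot : forall A, H' A <> bU B -> ~ IFset (pF P) H A).
    { intros A ne [h1 [h2 h3]]. apply h3. rewrite <- (Hle A ne). apply Hc; auto. }
    assert (PFnot : forall i A, H' A <> bU B -> ~ PFi P H i A).
    { induction i; intros A ne h; [destruct h|].
      apply PFi_S in h. destruct h as [b [Hin Hn]]. apply Hn.
      assert (Hhead : restrict H' (Head P) A = H' A)
        by (apply restrict_in; exists b; auto).
      assert (Heq : H' A = TR P (ioplus (pF P) H') A).
      { rewrite <- Hhead. apply Hs. rewrite Hhead; auto. }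
      destruct (TR_spec P (ioplus (pF P) H') A) as [b' [Hin' He']].
      { rewrite <- Heq; auto. }
      rewrite (Huniq A b b' Hin Hin'). rewrite <- Heq, (Hle A ne) in He'.
      eapply equivI_mono; [exact He'|]. apply ile_oplus; [|apply Gint_compat].
      intros A' ne'. unfold Gint. rewrite restrict_in. apply Hle; auto.
      split; [apply IFnot | apply IHi]; auto. }
    intros A ne. split; auto. intros [i hi]. eapply PFnot; eauto. }
  assert (soundG : sound P G).
  { destruct (PFi_stable P H) as [N HN]. split.
    - exact (Gint_compat P H (PFset P H)).
    - intros A hne. pose proof (restrict_ne hne) as [[b Hin] e]. rewrite e in *.
      pose proof (restrict_ne hne) as [[nIF nPF] eG]. unfold G. rewrite eG.
      symmetry. apply TR_eq with b; auto.
      assert (hN : ~ PFi P H (S N) A) by (intro h; apply nPF; exists (S N); auto).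
      rewrite PFi_S in hN.
      assert (he : equivI (ioplus (pF P) (Gint P H (PFi P H N))) b (H A)).
      { apply NNPP; intro hn. apply hN. exists b; auto. }
      eapply equivI_mono; [exact he|]. apply ile_oplus; [|apply Gint_compat].
      apply Gint_anti. intros A' [i hi]. eapply HN; eauto. }
  assert (ileG : ile G H).
  { intros A ne. unfold G in *. apply (restrict_ne ne). }
  apply functional_extensionality. intro A. fold G.
  apply le_k_anti.
  - unfold support. apply bigkjoin_lub. intros y [H' [h1 [h2 ->]]].
    destruct (classic (H' A = bU B)) as [e|ne].
    + rewrite e; apply bU_least.
    + rewrite (h1 A ne). unfold G. rewrite restrict_in by (apply (upper H'); auto).
      apply le_k_refl.
  - unfold support. apply bigkjoin_ub. exists G; auto.
Qed.
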